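(* Let $\hat{\mathsf A}$ be a $\chi\times\chi$ matrix with entries in $\mathcal A$, and let $A_0=\langle\hat 1,\hat{\mathsf A}\rangle$ be the complex matrix of its identity components. If every eigenvalue of the transfer matrix $T_A$ lies strictly inside the unit disk, then every eigenvalue of $A_0$ lies strictly inside the unit disk.
   Context: $\mathcal A$ is the algebra of operators on $\mathbb C^q$ with inner product $\langle\hat A,\hat B\rangle=\mathrm{Tr}[\hat A^\dagger\hat B]/\mathrm{Tr}[\hat 1]$ and an orthonormal basis $\{\hat O_\alpha\}$ with $\hat O_0=\hat 1$. Writing $\hat{\mathsf A}=\sum_\alpha\hat O_\alpha A_\alpha$ with $(A_\alpha)_{ab}=\langle\hat O_\alpha,\hat{\mathsf A}_{ab}\rangle$ (so $A_0=\langle\hat 1,\hat{\mathsf A}\rangle$ entrywise), the transfer matrix is $T_A=\sum_\alpha\overline{A_\alpha}\otimes A_\alpha$. *)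

(* Defs.v *)
From HB Require Import structures.
From mathcomp Require Import all_boot all_order all_algebra.
From mathcomp Require Import mxtens.
Set Implicit Arguments. Unset Strict Implicit. Unset Printing Implicit Defensive.
Import Order.TTheory GRing.Theory Num.Theory.
Local Open Scope ring_scope.

Definition adjmx {C : numClosedFieldType} {m n : nat} (A : 'M[C]_(m, n)) : 'M[C]_(n, m) :=
  (map_mx Num.conj A)^T.

Definition hs_inner {C : numClosedFieldType} {q : nat} (A B : 'M[C]_q) : C :=
  \tr (adjmx A *m B) / \tr (1%:M : 'M[C]_q).

Definition orthonormal_basis {C : numClosedFieldType} {q : nat} {I : finType}
  (O : I -> 'M[C]_q) : Prop :=
  (forall a b, hs_inner (O a) (O b) = (a == b)%:R) /\
  (forall X : 'M[C]_q, exists c : I -> C, X = \sum_a c a *: O a).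

Definition comp_mx {C : numClosedFieldType} {q chi : nat}
  (O' : 'M[C]_q) (Ahat : 'M['M[C]_q]_chi) : 'M[C]_chi :=
  \matrix_(a, b) hs_inner O' (Ahat a b).

Definition transfer_mx {C : numClosedFieldType} {q chi : nat} {I : finType}
  (O : I -> 'M[C]_q) (Ahat : 'M['M[C]_q]_chi) : 'M[C]_(chi * chi) :=
  \sum_(al : I) tensmx (map_mx Num.conj (comp_mx (O al) Ahat)) (comp_mx (O al) Ahat).

(* Main.v *)
Require Import Defs.
From HB Require Import structures.
From mathcomp Require Import all_boot all_order all_algebra.
From mathcomp Require Import mxtens spectral sesquilinear ring zify.
Import Order.TTheory GRing.Theory Num.Theory.
Local Open Scope ring_scope.
Set Implicit Arguments. Unset Strict Implicit. Unset Printing Implicit Defensive.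
Section A.
Variable C : numClosedFieldType.

Lemma adjmxM m n p (A : 'M[C]_(m, n)) (B : 'M[C]_(n, p)) :
  adjmx (A *m B) = adjmx B *m adjmx A.
Proof. by rewrite /adjmx map_mxM trmx_mul. Qed.

Lemma adjmxK m n (A : 'M[C]_(m, n)) : adjmx (adjmx A) = A.
Proof.
by apply/matrixP => i j; rewrite /adjmx !mxE conjCK.
Qed.

Lemma adjmxD m n (A B : 'M[C]_(m, n)) : adjmx (A + B) = adjmx A + adjmx B.
Proof. by apply/matrixP => i j; rewrite /adjmx !mxE rmorphD. Qed.

Lemma adjmxN m n (A : 'M[C]_(m, n)) : adjmx (- A) = - adjmx A.
Proof. by apply/matrixP => i j; rewrite /adjmx !mxE rmorphN. Qed.

Lemma adjmxZ m n a (A : 'M[C]_(m, n)) : adjmx (a *: A) = a^* *: adjmx A.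
Proof. by apply/matrixP => i j; rewrite /adjmx !mxE rmorphM. Qed.

Lemma adjmx1 n : adjmx (1%:M : 'M[C]_n) = 1%:M.
Proof. by apply/matrixP => i j; rewrite /adjmx !mxE rmorph_nat eq_sym. Qed.

Lemma adjmx_sum m n (I : finType) (F : I -> 'M[C]_(m, n)) :
  adjmx (\sum_i F i) = \sum_i adjmx (F i).
Proof.
have a0 : adjmx (0 : 'M[C]_(m, n)) = 0.
  by apply/matrixP => i j; rewrite /adjmx !mxE rmorph0.
exact: (big_morph _ (@adjmxD m n) a0).
Qed.

Definition qf n (W : 'M[C]_n) (u : 'rV[C]_n) : C := (u *m W *m adjmx u) 0 0.

Lemma qf_norm n (u : 'rV[C]_n) : qf 1%:M u = \sum_i u 0 i * (u 0 i)^*.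
Proof. by rewrite /qf mulmx1 !mxE; apply: eq_bigr => i _; rewrite !mxE. Qed.

Lemma qf_norm_gt0 n (u : 'rV[C]_n) : u != 0 -> 0 < qf 1%:M u.
Proof.
move=> un0; rewrite qf_norm.
have [i ui] : exists i, u 0 i != 0.
  apply/existsP; apply: contraR un0 => /existsPn H.
  by apply/eqP/rowP => j; rewrite mxE; apply/eqP; have := H j; rewrite negbK.
rewrite (bigD1 i) //= ltr_pwDl ?sumr_ge0 // => [|j _]; last exact: mul_conjC_ge0.
by rewrite mul_conjC_gt0.
Qed.

End A.

Section PSD.
Variable C : numClosedFieldType.

Definition psd n (W : 'M[C]_n) := forall u, 0 <= qf W u.
Definition pd n (W : 'M[C]_n) := forall u, u != 0 -> 0 < qf W u.

Lemma prod_coef_pos (r : seq C) : (forall z, z \in r -> 0 < - z) ->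
  (forall k, 0 <= (\prod_(z <- r) ('X - z%:P))`_k) /\
  (forall k, (k <= size r)%N -> 0 < (\prod_(z <- r) ('X - z%:P))`_k).
Proof.
elim: r => [|x r IH] hr.
  rewrite big_nil; split => k; rewrite coef1; first by case: (k == 0%N); rewrite ?ler01.
  by rewrite leqn0 => ->; rewrite ltr01.
have [IH1 IH2] : _ := IH (fun z zr => hr z (@mem_behead _ (x :: r) z zr)).
have hx : 0 < - x by apply: hr; rewrite mem_head.
rewrite big_cons; set q := \prod_(z <- r) _.
have cf : forall k, (('X - x%:P) * q)`_k = (if k == 0%N then 0 else q`_k.-1) + (- x) * q`_k.
  by move=> k; rewrite mulrBl coefB coefXM -coefCM polyCN mulNr coefN.
split => k; rewrite cf.
  apply: addr_ge0; first by case: (k == 0%N) => //; apply: IH1.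
  by apply: mulr_ge0; [apply: ltW|apply: IH1].
move=> hk; case: (eqVneq k 0%N) => [->|kn0].
  by rewrite add0r mulr_gt0 // IH2.
apply: ltr_pwDl; first by apply: IH2; move: hk kn0 => /=; lia.
by apply: mulr_ge0; [apply: ltW|apply: IH1].
Qed.

Lemma pd_char_coef n (W : 'M[C]_n) : pd W ->
  forall k, (k <= n)%N -> 0 < (char_poly (- W))`_k.
Proof.
move=> hW k kn.
have [r hr] := closed_field_poly_normal (char_poly (- W)).
have l1 : lead_coef (char_poly (- W)) = 1 by apply/monicP; exact: char_poly_monic.
rewrite l1 scale1r in hr.
have szr : size r = n.
  by have := size_char_poly (- W); rewrite hr size_prod_XsubC => -[].
have pos : forall z, z \in r -> 0 < - z.
  move=> z zr; have : root (char_poly (- W)) z by rewrite hr root_prod_XsubC.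
  rewrite -eigenvalue_root_char => /eigenvalueP [v hv vn0].
  have : 0 < qf W v by apply: hW.
  have -> : qf W v = (- z) * qf 1%:M v.
    rewrite /qf mulmx1 -[W]opprK mulmxN hv.
    by rewrite -scaleNr -scalemxAl mxE.
  by rewrite pmulr_lgt0 // qf_norm_gt0.
rewrite hr; apply: (prod_coef_pos pos).2; rewrite szr //.
Qed.


Lemma monic_pos n (p : {poly C}) : p \is monic -> size p = n.+1 ->
  (forall k, 0 <= p`_k) -> forall x, 0 < x -> 0 < p.[x].
Proof.
move=> mp szp hk x x0; rewrite horner_coef.
have lc : p`_n = 1 by move/monicP: mp; rewrite lead_coefE szp.
rewrite szp (bigD1 ord_max) //=; apply: ltr_pwDl.
  by rewrite lc mul1r exprn_gt0.
by apply: sumr_ge0 => i _; apply: mulr_ge0; [exact: hk | apply: exprn_ge0; exact: ltW].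
Qed.

Lemma adjmx_tC m n (P : 'M[C]_(m, n)) : adjmx P = map_mx Num.conj (P^T).
Proof. by rewrite /adjmx map_trmx. Qed.

Lemma psd_of_coef n (W : 'M[C]_n) : adjmx W = W ->
  (forall k, 0 <= (char_poly (- W))`_k) -> psd W.
Proof.
move=> hW hk.
have Wh : W \is hermsymmx.
  by apply/is_hermitianmxP; rewrite expr0 scale1r -adjmx_tC hW.
have /orthomx_spectralP hWe := hermitian_normalmx Wh.
set P := spectralmx W in hWe; set d := spectral_diag W in hWe.
have Pu : P \is unitarymx := spectral_unitarymx W.
have Punit : P \in unitmx := unitarymx_unit Pu.
have dr := hermitian_spectral_diag_real Wh; fold d in dr.
have PW : P *m W = diag_mx d *m P by rewrite hWe !mulmxA mulmxV // mul1mx.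
have dge : forall i, 0 <= d 0 i.
  move=> i; set ri := row i P.
  have rW : ri *m W = d 0 i *: ri.
    rewrite /ri -row_mul PW mul_diag_mx; apply/rowP => j; rewrite !mxE //.
  have rn0 : ri != 0.
    apply/eqP => r0; move/row_unitarymxP: Pu => /(_ i i); rewrite eqxx dotmxE.
    by rewrite -/ri r0 mul0mx mxE => /eqP; rewrite eq_sym oner_eq0.
  have : root (char_poly (- W)) (- d 0 i).
    rewrite -eigenvalue_root_char; apply/eigenvalueP; exists ri => //.
    by rewrite mulmxN rW scaleNr.
  have dir : d 0 i \is Num.real by move/mxOverP: dr => /(_ 0 i).
  case: (real_leP (real0 _) dir) => // dlt.
  have := monic_pos (char_poly_monic (- W)) (size_char_poly (- W)) hk.
  move=> /(_ (- d 0 i)); rewrite oppr_gt0 dlt => /(_ isT) /lt0r_neq0 h; rewrite /root (negPf h) //.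
move=> u; set w := u *m adjmx P.
have -> : qf W u = qf (diag_mx d) w.
  rewrite /qf /w adjmxM adjmxK hWe invmx_unitary // -adjmx_tC !mulmxA //.
rewrite /qf mxE; apply: sumr_ge0 => j _; rewrite mul_mx_diag !mxE.
by rewrite mulrAC mulr_ge0 // mul_conjC_ge0.
Qed.

End PSD.
Section L.
Variable C : numClosedFieldType.

Lemma conj_poly_mulK (q g : {poly C}) : g != 0 -> map_poly Num.conj g = g ->
  map_poly Num.conj (q * g) = q * g -> map_poly Num.conj q = q.
Proof.
move=> gn0 hg hp; apply: (mulIf gn0); rewrite -[in LHS]hg -rmorphM /=.
exact: hp.
Qed.

Lemma poly_sign (p : {poly C}) : map_poly Num.conj p = p ->
  forall a b : C, a \is Num.real -> b \is Num.real -> a <= b ->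
  (forall x, a <= x -> x < b -> ~~ root p x) -> 0 <= p.[a] * p.[b].
Proof.
have [n] := ubnP (size p); elim: n p => // n IH p szp hp a b ar br ab hr.
have [sz1|sz1] := leqP (size p) 1.
  rewrite (size1_polyC sz1) !hornerC.
  have : (p`_0)^* = p`_0 by rewrite -{2}hp coef_map.
  by move=> hc; rewrite -{2}hc mul_conjC_ge0.
have /closed_rootP [z rz] : size p != 1 by rewrite neq_ltn sz1 orbT.
have pn0 : p != 0 by rewrite -size_poly_gt0 (ltn_trans _ sz1).
have [zr|znr] := boolP (z \is Num.real).
  have /factor_theorem [q pq] := rz.
  have qn0 : q != 0 by apply: contraNneq pn0 => q0; rewrite pq q0 mul0r.
  have hq : map_poly Num.conj q = q.
    apply: (conj_poly_mulK (g := 'X - z%:P)); rewrite ?polyXsubC_eq0 //.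
      by rewrite map_polyXsubC /= (CrealP zr).
    by rewrite -pq.
  have szq : (size q < n)%N.
    move: szp; rewrite pq size_Mmonic ?monicXsubC // size_XsubC addn2 /= ltnS. done.
  have IHq := IH q szq hq a b ar br ab.
  rewrite pq !hornerM !hornerXsubC.
  have -> : q.[a] * (a - z) * (q.[b] * (b - z)) = (q.[a] * q.[b]) * ((a - z) * (b - z)).
    by ring.
  apply: mulr_ge0.
    apply: IHq => x ax xb; apply: contra (hr x ax xb).
    by rewrite pq rootM => ->.
  case: (real_leP ar zr) => [az|za].
    have bz : b <= z.
      case: (real_leP br zr) => // zb.
      by have := hr z az zb; rewrite rz.
    by apply: mulr_le0; rewrite subr_le0 // (le_trans ab).
  by apply: mulr_ge0; rewrite subr_ge0 ltW // (lt_le_trans za).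
have czn : z^* != z by apply: contra znr => /eqP h; apply/CrealP.
have rcz : root p z^*.
  by rewrite /root -hp horner_map /= (eqP rz) rmorph0.
have /factor_theorem [q1 pq1] := rz.
have rq1 : root q1 z^*.
  move: rcz; rewrite /root pq1 hornerM hornerXsubC mulf_eq0.
  by rewrite subr_eq0 (negPf czn) orbF.
have /factor_theorem [q qq1] := rq1.
pose g := ('X - z^*%:P) * ('X - z%:P).
have pqg : p = q * g by rewrite pq1 qq1 /g mulrA.
have gn0 : g != 0 by rewrite /g mulf_eq0 !polyXsubC_eq0.
have qn0 : q != 0 by apply: contraNneq pn0 => q0; rewrite pqg q0 mul0r.
have hg : map_poly Num.conj g = g.
  by rewrite /g rmorphM /= !map_polyXsubC /= conjCK mulrC.
have hq : map_poly Num.conj q = q.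
  by apply: (conj_poly_mulK gn0 hg); rewrite -pqg.
have szq : (size q < n)%N.
  have mg : g \is monic by rewrite /g monicMl ?monicXsubC.
  have szg : size g = 3.
    by rewrite /g size_Mmonic ?monicXsubC ?polyXsubC_eq0 // !size_XsubC.
  move: szp; rewrite pqg size_Mmonic // szg addn3 /= ltnS => h.
  exact: ltn_trans h.
have IHq := IH q szq hq a b ar br ab.
have gx : forall x, x \is Num.real -> 0 <= g.[x].
  move=> x xr; rewrite /g hornerM !hornerXsubC.
  have -> : x - z^* = (x - z)^* by rewrite rmorphB /= (CrealP xr).
  by rewrite mulrC mul_conjC_ge0.
rewrite pqg (hornerM q g a) (hornerM q g b).
have -> : q.[a] * g.[a] * (q.[b] * g.[b]) = (q.[a] * q.[b]) * (g.[a] * g.[b]).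
  by ring.
apply: mulr_ge0; last by apply: mulr_ge0; apply: gx.
apply: IHq => x ax xb; apply: contra (hr x ax xb).
by rewrite pqg rootM => ->.
Qed.

End L.
Section B.
Variable C : numClosedFieldType.
Variables (chi : nat) (I : finType) (A : I -> 'M[C]_chi).

Definition Tm : 'M[C]_(chi * chi) := \sum_al tensmx (map_mx Num.conj (A al)) (A al).
Definition Es (X : 'M[C]_chi) := \sum_al adjmx (A al) *m X *m A al.
Definition unvec (x : 'rV[C]_(chi*chi)) : 'M[C]_chi :=
  \matrix_(i,j) x 0 (mxtens_index (i,j)).
Definition vec (X : 'M[C]_chi) : 'rV[C]_(chi*chi) :=
  \row_k X (mxtens_unindex k).1 (mxtens_unindex k).2.

Lemma vecK : cancel vec unvec.
Proof. by move=> X; apply/matrixP => i j; rewrite !mxE mxtens_indexK. Qed.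

Lemma unvecK : cancel unvec vec.
Proof.
move=> x; apply/rowP => k; rewrite !mxE.
by rewrite -surjective_pairing mxtens_unindexK.
Qed.

Lemma unvecD x y : unvec (x + y) = unvec x + unvec y.
Proof. by apply/matrixP => i j; rewrite !mxE. Qed.
Lemma unvecZ a x : unvec (a *: x) = a *: unvec x.
Proof. by apply/matrixP => i j; rewrite !mxE. Qed.
Lemma unvec0 : unvec 0 = 0.
Proof. by apply/matrixP => i j; rewrite !mxE. Qed.
Lemma unvec_eq0 x : (unvec x == 0) = (x == 0).
Proof.
apply/eqP/eqP => [h|->]; last exact: unvec0.
by rewrite -[x]unvecK h -unvec0 unvecK.
Qed.

Lemma unvec_mul x (B D : 'M[C]_chi) :
  unvec (x *m (B *t D)) = B^T *m unvec x *m D.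
Proof.
apply/matrixP => k l; rewrite !mxE.
have bij : {on [pred i | true], bijective (@mxtens_index chi chi)}.
  by apply: onW_bij; exists (@mxtens_unindex chi chi); [exact: mxtens_indexK|exact: mxtens_unindexK].
rewrite (reindex _ bij) /=.
rewrite (eq_bigr (fun p => x 0 (mxtens_index (p.1, p.2)) *
   (B *t D) (mxtens_index (p.1, p.2)) (mxtens_index (k, l)))); last first.
  by move=> [i j].
rewrite -(pair_big xpredT xpredT (fun i j => x 0 (mxtens_index (i, j)) *
   (B *t D) (mxtens_index (i, j)) (mxtens_index (k, l)))) /=.
rewrite exchange_big /=; apply: eq_bigr => j _; rewrite !mxE big_distrl /=.
apply: eq_bigr => i _; rewrite tensmxE !mxE; ring.
Qed.

Lemma unvecT x : unvec (x *m Tm) = Es (unvec x).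
Proof.
rewrite /Tm /Es mulmx_sumr.
have lin : forall (F : I -> 'rV[C]_(chi*chi)), unvec (\sum_al F al) = \sum_al unvec (F al).
  by move=> F; apply: (big_morph _ unvecD unvec0).
rewrite lin; apply: eq_bigr => al _; rewrite unvec_mul.
by rewrite /adjmx map_trmx.
Qed.

Lemma EsD X Y : Es (X + Y) = Es X + Es Y.
Proof.
by rewrite /Es -big_split /=; apply: eq_bigr => al _; rewrite mulmxDr mulmxDl.
Qed.
Lemma EsZ a X : Es (a *: X) = a *: Es X.
Proof.
by rewrite /Es scaler_sumr; apply: eq_bigr => al _; rewrite -scalemxAr -scalemxAl.
Qed.
Lemma EsN X : Es (- X) = - Es X.
Proof. by rewrite -scaleN1r EsZ scaleN1r. Qed.
Lemma EsB X Y : Es (X - Y) = Es X - Es Y.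
Proof. by rewrite EsD EsN. Qed.
Lemma Es_adj X : Es (adjmx X) = adjmx (Es X).
Proof.
rewrite /Es adjmx_sum; apply: eq_bigr => al _.
by rewrite !adjmxM adjmxK mulmxA.
Qed.


Lemma eig_Es (Hs : forall lam : C, eigenvalue Tm lam -> `|lam| < 1) X mu :
  X != 0 -> Es X = mu *: X -> `|mu| < 1.
Proof.
move=> Xn0 EX; apply: Hs; apply/eigenvalueP; exists (vec X).
  apply: (can_inj (@unvecK)); rewrite unvecT vecK EX.
  by apply/matrixP => i j; rewrite !mxE mxtens_indexK.
by apply: contraNneq Xn0 => h; rewrite -(vecK X) h unvec0.
Qed.

Lemma inj_Es (Hs : forall lam : C, eigenvalue Tm lam -> `|lam| < 1) (s : C) Z :
  0 <= s -> s <= 1 -> Z = s *: Es Z -> Z = 0.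
Proof.
move=> s0 s1 HZ; apply/eqP; apply/negPn/negP => Zn0.
have sn0 : s != 0 by apply: contraNneq Zn0 => s0'; rewrite HZ s0' scale0r.
have sp : 0 < s by rewrite lt_def sn0.
have : `|s^-1| < 1.
  apply: (eig_Es Hs Zn0); rewrite {2}HZ scalerA mulVf // scale1r //.
rewrite ger0_norm ?invr_ge0 ?ltW // => h.
have g1 : 1 <= s^-1 by rewrite invf_ge1.
by have := lt_le_trans h g1; rewrite ltxx.
Qed.

End B.

Lemma zmod_swap (V : zmodType) (a b c d : V) : a - b - (c - d) = (a - c) - (b - d).
Proof.
rewrite !opprB !addrA (addrAC a (-b) d) (addrAC a (-c) d) -!addrA.
by congr (_ + _); congr (_ + _); rewrite addrC.
Qed.

Section M.
Variable C : numClosedFieldType.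
Variables (chi : nat) (I : finType) (A : I -> 'M[C]_chi).
Hypothesis Hs : forall lam : C, eigenvalue (Tm A) lam -> `|lam| < 1.

Definition Mp : 'M[{poly C}]_(chi * chi) :=
  \matrix_(i, j) (((i == j)%:R)%:P - 'X * (Tm A i j)%:P).
Definition dp := \det Mp.
Definition yp : 'rV[{poly C}]_(chi * chi) := map_mx polyC (vec 1%:M) *m \adj Mp.
Definition Wp : 'M[{poly C}]_chi :=
  \matrix_(i, j) (map_poly Num.conj dp * yp 0 (mxtens_index (i, j))).
Definition Ws (s : C) := map_mx (horner_eval s) Wp.
Definition ys (s : C) := map_mx (horner_eval s) yp.

Lemma Mp_ev s : map_mx (horner_eval s) Mp = 1%:M - s *: Tm A.
Proof.
apply/matrixP => i j; rewrite !mxE /= horner_evalE !hornerE.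
by [].
Qed.

Lemma ys_eq s : ys s *m (1%:M - s *: Tm A) = dp.[s] *: vec 1%:M.
Proof.
rewrite /ys /yp -Mp_ev -map_mxM -mulmxA mul_adj_mx mul_mx_scalar map_mxZ /=.
rewrite horner_evalE -/dp; congr (_ *: _).
by rewrite -map_mx_comp map_mx_id // => x /=; rewrite horner_evalE hornerC.
Qed.

Lemma Ws_eq s : s \is Num.real -> Ws s = (dp.[s])^* *: unvec (ys s).
Proof.
move=> sr; apply/matrixP => i j; rewrite !mxE /= rmorphM /=; congr (_ * _).
by rewrite horner_evalE -{1}(CrealP sr) horner_map.
Qed.

Lemma Ys_eq s : unvec (ys s) - s *: Es A (unvec (ys s)) = dp.[s] *: 1%:M.
Proof.
have := congr1 (@unvec C chi) (ys_eq s).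
rewrite mulmxBr mulmx1 -scalemxAr unvecD unvecZ -scaleNr unvecZ unvecT vecK.
by rewrite scaleNr.
Qed.

Lemma Ws_eq2 s : s \is Num.real ->
  Ws s - s *: Es A (Ws s) = ((dp.[s])^* * dp.[s]) *: 1%:M.
Proof.
move=> sr; rewrite Ws_eq // EsZ (scalerA s) (mulrC s) -(scalerA _ s) -scalerBr Ys_eq scalerA.
by [].
Qed.

Lemma dp_neq0 s : 0 <= s -> s <= 1 -> dp.[s] != 0.
Proof.
move=> s0 s1; apply/negP => /eqP d0.
have : \det (1%:M - s *: Tm A) == 0.
  by rewrite -Mp_ev det_map_mx /= horner_evalE -/dp d0.
move=> /det0P [v vn0 hv].
have : unvec v = 0.
  apply: (inj_Es Hs s0 s1); apply/eqP; rewrite -subr_eq0; apply/eqP.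
  have := congr1 (@unvec C chi) hv.
  by rewrite mulmxBr mulmx1 -scalemxAr unvecD -scaleNr !unvecZ unvecT unvec0 scaleNr.
by move/eqP; rewrite unvec_eq0 (negPf vn0).
Qed.

Lemma Ws_herm s : 0 <= s -> s <= 1 -> adjmx (Ws s) = Ws s.
Proof.
move=> s0 s1; have sr : s \is Num.real by apply: ger0_real.
set W := Ws s; set c := (dp.[s])^* * dp.[s].
have cr : c^* = c by rewrite /c rmorphM /= conjCK mulrC.
have hZ : (W - adjmx W) = s *: Es A (W - adjmx W).
  apply/eqP; rewrite -subr_eq0; apply/eqP.
  have e1 := Ws_eq2 sr; fold W c in e1.
  have e2 := congr1 (@adjmx _ _ _) e1.
  rewrite adjmxD adjmxN !adjmxZ (CrealP sr) -Es_adj cr adjmx1 in e2.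
  rewrite EsB scalerBr zmod_swap.
  by rewrite e1 e2 subrr.
have /eqP := inj_Es Hs s0 s1 hZ; rewrite subr_eq0 => /eqP h.
exact: esym h.
Qed.

End M.

Lemma char_poly_tr (R : comNzRingType) n (M : 'M[R]_n) : char_poly M^T = char_poly M.
Proof.
rewrite /char_poly -det_tr; congr (\det _); apply/matrixP => i j.
by rewrite !mxE eq_sym.
Qed.

Lemma herm_coef_real (C : numClosedFieldType) n (W : 'M[C]_n) : adjmx W = W ->
  forall k, ((char_poly (- W))`_k)^* = (char_poly (- W))`_k.
Proof.
move=> hW k; rewrite -(coef_map Num.conj) map_char_poly.
have -> : map_mx Num.conj (- W) = (- W)^T.
  have mW : map_mx Num.conj W = W^T by rewrite -{2}hW /adjmx trmxK.
  by rewrite map_mxN mW; apply/matrixP => i j; rewrite !mxE.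
by rewrite char_poly_tr.
Qed.

Section M2.
Variable C : numClosedFieldType.
Variables (chi : nat) (I : finType) (A : I -> 'M[C]_chi).
Hypothesis Hs : forall lam : C, eigenvalue (Tm A) lam -> `|lam| < 1.

Definition cpk k := (char_poly (- Wp A))`_k.
Definition rp k := cpk k + map_poly Num.conj (cpk k).

Lemma cp_ev s k : (char_poly (- Ws A s))`_k = (cpk k).[s].
Proof.
have h := map_char_poly (horner_eval s) (- Wp A).
rewrite map_mxN in h.
by rewrite /Ws -h coef_map /= horner_evalE.
Qed.

Lemma rp_conj k : map_poly Num.conj (rp k) = rp k.
Proof.
apply/polyP => i; rewrite /rp coef_map /= !coefD coef_map /= rmorphD /= conjCK.
by rewrite addrC.
Qed.

Lemma rp_ev s k : 0 <= s -> s <= 1 -> (rp k).[s] = (char_poly (- Ws A s))`_k *+ 2.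
Proof.
move=> s0 s1; have sr : s \is Num.real by apply: ger0_real.
rewrite /rp hornerD -{2}(CrealP sr) horner_map /= -cp_ev.
by rewrite herm_coef_real ?Ws_herm // mulr2n.
Qed.

End M2.

Section QF.
Variable C : numClosedFieldType.

Lemma qfD n (X Y : 'M[C]_n) u : qf (X + Y) u = qf X u + qf Y u.
Proof. by rewrite /qf mulmxDr mulmxDl mxE. Qed.
Lemma qfZ n a (X : 'M[C]_n) u : qf (a *: X) u = a * qf X u.
Proof. by rewrite /qf -scalemxAr -scalemxAl mxE. Qed.
Lemma qf_sum n (J : finType) (F : J -> 'M[C]_n) u :
  qf (\sum_j F j) u = \sum_j qf (F j) u.
Proof.
rewrite /qf mulmx_sumr mulmx_suml summxE; apply: eq_bigr => j _ //.
Qed.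
Lemma qf_conj n (W B : 'M[C]_n) u :
  qf (adjmx B *m W *m B) u = qf W (u *m adjmx B).
Proof. by rewrite /qf adjmxM adjmxK !mulmxA. Qed.
Lemma qf_scale n (W : 'M[C]_n) a u : qf W (a *: u) = a * a^* * qf W u.
Proof.
rewrite /qf adjmxZ -scalemxAr -!scalemxAl !mxE; ring.
Qed.

Lemma min_sel (rs : seq C) : exists b, [/\ 0 <= b, b <= 1, (b == 1) || (b \in rs) &
  forall x, x \in rs -> 0 <= x -> x < b -> False].
Proof.
elim: rs => [|x rs [b' [b0 b1 hb hm]]].
  by exists 1; split; rewrite ?ler01 ?lexx ?eqxx.
have [/andP [x0 xb]|nx] := boolP ((0 <= x) && (x < b')).
  exists x; split => //.
  - exact: ltW (lt_le_trans xb b1).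
  - by rewrite mem_head orbT.
  move=> y; rewrite in_cons => /orP [/eqP ->|yr] y0 yx; first by rewrite ltxx in yx.
  exact: hm yr y0 (lt_trans yx xb).
exists b'; split => //.
- by move: hb => /orP [->|h] //; rewrite in_cons h !orbT.
move=> y; rewrite in_cons => /orP [/eqP ->|yr] y0 yx; last exact: hm yr y0 yx.
by move: nx; rewrite y0 yx.
Qed.

End QF.

Section M3.
Variable C : numClosedFieldType.
Variables (chi : nat) (I : finType) (A : I -> 'M[C]_chi).
Hypothesis Hs : forall lam : C, eigenvalue (Tm A) lam -> `|lam| < 1.

Lemma qf_Es (W : 'M[C]_chi) u : qf (Es A W) u = \sum_al qf W (u *m adjmx (A al)).
Proof. by rewrite /Es qf_sum; apply: eq_bigr => al _; rewrite qf_conj. Qed.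

Lemma qf_Es_ge0 (W : 'M[C]_chi) u : psd W -> 0 <= qf (Es A W) u.
Proof. by move=> hW; rewrite qf_Es; apply: sumr_ge0 => al _; apply: hW. Qed.

Lemma pd_of (s c : C) (W : 'M[C]_chi) : 0 <= s -> psd W ->
  W - s *: Es A W = c *: 1%:M -> 0 < c -> pd W.
Proof.
move=> s0 hW e c0 u un0.
have -> : W = (W - s *: Es A W) + s *: Es A W by rewrite subrK.
rewrite qfD e !qfZ ltr_pwDl ?mulr_gt0 ?qf_norm_gt0 //.
by apply: mulr_ge0 => //; apply: qf_Es_ge0.
Qed.

Lemma cpos s : 0 <= s -> s <= 1 -> 0 < (dp A).[s]^* * (dp A).[s].
Proof. by move=> s0 s1; rewrite mulrC mul_conjC_gt0 dp_neq0. Qed.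

Lemma W1_psd : psd (Ws A 1).
Proof.
have l01 : (0 : C) <= 1 by rewrite ler01.
pose P := \prod_(k < chi.+1) rp A k.
have W0pd : pd (Ws A 0).
  have e := Ws_eq2 A (real0 _); rewrite scale0r subr0 in e.
  by move=> u un0; rewrite e qfZ mulr_gt0 ?qf_norm_gt0 ?cpos ?lexx.
have rp0 : forall k : 'I_chi.+1, 0 < (rp A k).[0].
  move=> k; rewrite rp_ev ?lexx // pmulrn_lgt0 //.
  by apply: (pd_char_coef W0pd); rewrite -ltnS.
have Pn0 : P != 0.
  apply: contraTneq isT => P0.
  have : P.[0] != 0.
    rewrite /P horner_prod; apply/prodf_neq0 => k _.
    by rewrite gt_eqF ?rp0.
  by rewrite P0 horner0 eqxx.
have [rs hrs] := closed_field_poly_normal P.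
have ln0 : lead_coef P != 0 by rewrite lead_coef_eq0.
have rootP : forall x, root P x = (x \in rs).
  by move=> x; rewrite hrs rootZ // root_prod_XsubC.
have [b [b0 b1 hb hmin]] := min_sel rs.
have rootk : forall (k : 'I_chi.+1) x, root (rp A k) x -> root P x.
  move=> k x /eqP rk; rewrite /root /P horner_prod (bigD1 k) //= rk mul0r //.
have noroot : forall (k : 'I_chi.+1) x, 0 <= x -> x < b -> ~~ root (rp A k) x.
  move=> k x x0 xb; apply/negP => /rootk; rewrite rootP => xr.
  exact: hmin xr x0 xb.
have call : forall k, 0 <= (char_poly (- Ws A b))`_k.
  move=> k; have [kl|kg] := leqP k chi; last first.
    by rewrite nth_default // size_char_poly.
  pose k' := (Ordinal (kl : (k < chi.+1)%N)).
  have := poly_sign (rp_conj A k') (real0 _) (ger0_real b0) b0 (noroot k').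
  rewrite pmulr_rge0 ?rp0 // rp_ev // pmulrn_lge0 //.
have psdb : psd (Ws A b) := psd_of_coef (Ws_herm Hs b0 b1) call.
case/orP: hb => [/eqP <- //|brs].
have pdb : pd (Ws A b).
  apply: (pd_of b0 psdb (Ws_eq2 A (ger0_real b0))).
  exact: cpos.
move: brs; rewrite -rootP /root /P horner_prod => /prodf_eq0 [k _].
rewrite rp_ev // => /eqP /eqP.
rewrite mulrn_eq0 /= => /eqP h.
have := pd_char_coef pdb (_ : (k <= chi)%N); rewrite h ltxx.
by move=> /(_ (ltn_ord k)).
Qed.

End M3.

Theorem lemma2 (C : numClosedFieldType) (q chi : nat) (I : finType)
  (O : I -> 'M[C]_q) (al0 : I) (Ahat : 'M['M[C]_q]_chi) :
  (0 < q)%N ->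
  orthonormal_basis O ->
  O al0 = 1%:M ->
  (forall lam : C, eigenvalue (transfer_mx O Ahat) lam -> `|lam| < 1) ->
  (forall lam : C, eigenvalue (comp_mx (O al0) Ahat) lam -> `|lam| < 1).
Proof.
move=> _ _ _ Hs lam hlam.
pose A := fun al => comp_mx (O al) Ahat.
have Hs' : forall lam, eigenvalue (Tm A) lam -> `|lam| < 1 := Hs.
pose W := Ws A 1.
have hW : psd W := W1_psd Hs'.
have c0 := cpos Hs' (@ler01 C) (lexx (1 : C)).
set c := _ * _ in c0.
have e : W - 1 *: Es A W = c *: 1%:M := Ws_eq2 A (real1 _).
rewrite scale1r in e.
set A0 := A al0.
have : eigenvalue A0^T lam.
  by rewrite eigenvalue_root_char char_poly_tr -eigenvalue_root_char.
move=> /eigenvalueP [w hw wn0].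
pose u := map_mx Num.conj w.
have un0 : u != 0.
  apply: contraNneq wn0 => u0; apply/eqP.
  have -> : w = map_mx Num.conj u by apply/matrixP => i j; rewrite !mxE conjCK.
  by rewrite u0; apply/matrixP => i j; rewrite !mxE rmorph0.
have hu : u *m adjmx A0 = lam^* *: u.
  by rewrite adjmx_tC /u -map_mxM hw map_mxZ.
set Q := qf W u.
have Q0 : 0 <= Q := hW u.
set N := c * qf 1%:M u.
have N0 : 0 < N by rewrite mulr_gt0 ?qf_norm_gt0.
have H : N + `|lam| ^+ 2 * Q <= Q.
  have WE : W = c *: 1%:M + Es A W by rewrite -e subrK.
  rewrite /Q {2}WE qfD qfZ -/N lerD2l qf_Es (bigD1 al0) //= -/A0 hu qf_scale conjCK.
  rewrite -(mulrC lam) -normCK -[X in X <= _]addr0 lerD2l.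
  by apply: sumr_ge0 => al _; apply: hW.
rewrite real_ltNge ?normr_real ?real1 //; apply/negP => l1.
have H2 : Q <= `|lam| ^+ 2 * Q by rewrite ler_peMl // exprn_ege1.
have : N + Q <= Q by apply: le_trans H; rewrite lerD2l.
by rewrite addrC gerDl => /(lt_le_trans N0); rewrite ltxx.
Qed.
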